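(* Let $(\mathsf K,\mathsf D)$ be a differential ring, $n\ge3$, $L=\sum_{k=0}^n\binom nk a_k\mathsf D^{n-k}$ ($a_0=1$), $u\in\mathsf K$, and let $L^{\star_u}:=(\mathsf D+a_1-u)^n+\sum_{m=2}^n\binom nm I_m(L)(\mathsf D+a_1-u)^{n-m}$ (rewritten in normal form $\sum_k\binom nk a_k^{\star_u}\mathsf D^{n-k}$, so that its first coefficient is $a_1-u$). Let $\delta=\Delta_{a_1}$. Then $W_2(L^{\star_u})=W_2(L)$, $$W_3(L^{\star_u})=W_3(L)+\tfrac32[u,W_2(L)],$$ and, if $n\ge4$, $$W_4(L^{\star_u})=W_4(L)+2[u,I_3(L)]+\tfrac65\Bigl([u,[u,W_2(L)]]-[\delta(u),W_2(L)]-2[u,\delta(W_2(L))]\Bigr).$$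
   Context: $\mathsf K$: unital associative (possibly noncommutative) ring with derivation $\mathsf D$; Ore algebra $\mathsf K\langle\mathsf D\rangle$ with $\mathsf D a=a\mathsf D+\mathsf D(a)$; $[x,y]=xy-yx$. For a monic operator $M=\sum_k\binom nk b_k\mathsf D^{n-k}$: $I_k(M)$ are the unique elements with $M=(\mathsf D+b_1)^n+\sum_{k\ge2}\binom nk I_k(M)(\mathsf D+b_1)^{n-k}$; $\Delta_{b_1}(x)=\mathsf D(x)+[b_1,x]$; $W_2(M)=I_2(M)$, $W_3(M)=I_3(M)-\frac32\Delta_{b_1}(I_2(M))$, $W_4(M)=I_4(M)-2\Delta_{b_1}(I_3(M))+\frac65\Delta_{b_1}^2(I_2(M))-\frac{3(5n+7)}{5(n+1)}I_2(M)^2$. *)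

(* Defs.v *)
(* Differential operators over a (noncommutative) Q-algebra K
   with a derivation D, represented in left normal form sum_i p_i D^i by their
   coefficient polynomial p : {poly K}.  The polynomial ring structure of
   {poly K} is used ONLY as a left K-module; the Ore product is [omul]. *)
From HB Require Import structures.
From mathcomp Require Import all_boot all_order all_algebra.
From Stdlib Require Import ClassicalEpsilon.
Set Implicit Arguments. Unset Strict Implicit. Unset Printing Implicit Defensive.
Import Order.TTheory GRing.Theory.
Local Open Scope ring_scope.

Section OreDefs.
Variables (K : algType rat) (D : K -> K).

Definition comm (x y : K) : K := x * y - y * x.

(* Ore product in K<D>:  (a D^i)(b D^j) = sum_k C(i,k) a D^k(b) D^(i-k+j) *)
Definition omul (p q : {poly K}) : {poly K} :=
  \sum_(i < size p) \sum_(j < size q) \sum_(k < i.+1)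
     ((p`_i * ('C(i, k)%:R * iter k D q`_j)) *: 'X^(i - k + j)).

Definition opow (p : {poly K}) (m : nat) : {poly K} := iter m (omul p) 1.

Definition Dplus (c : K) : {poly K} := 'X + c%:P.

(* for M = sum_k C(n,k) b_k D^(n-k), the coefficient b_1 = M_(n-1)/n *)
Definition b1 (n : nat) (M : {poly K}) : K := (n%:R^-1 : rat) *: M`_(n.-1).

Definition Iexpansion (n : nat) (M : {poly K}) (I : nat -> K) : Prop :=
  M = opow (Dplus (b1 n M)) n
      + \sum_(2 <= k < n.+1) (('C(n, k)%:R * I k) *: opow (Dplus (b1 n M)) (n - k)).

Definition Iinv (n : nat) (M : {poly K}) : nat -> K :=
  epsilon (inhabits (fun _ => 0)) (Iexpansion n M).

Definition Delta (b x : K) : K := D x + comm b x.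

Definition W2 (n : nat) (M : {poly K}) : K := Iinv n M 2.
Definition W3 (n : nat) (M : {poly K}) : K :=
  Iinv n M 3 - (3 / 2 : rat) *: Delta (b1 n M) (Iinv n M 2).
Definition W4 (n : nat) (M : {poly K}) : K :=
  Iinv n M 4 - (2 : rat) *: Delta (b1 n M) (Iinv n M 3)
  + (6 / 5 : rat) *: Delta (b1 n M) (Delta (b1 n M) (Iinv n M 2))
  - ((3 * (5 * n + 7))%:R / (5 * (n + 1))%:R : rat) *: (Iinv n M 2 * Iinv n M 2).

Definition opL (n : nat) (a : nat -> K) : {poly K} :=
  \sum_(k < n.+1) (('C(n, k)%:R * a k) *: 'X^(n - k)).

Definition Lstar (n : nat) (a : nat -> K) (u : K) : {poly K} :=
  opow (Dplus (a 1%N - u)) n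
  + \sum_(2 <= m < n.+1)
      (('C(n, m)%:R * Iinv n (opL n a) m) *: opow (Dplus (a 1%N - u)) (n - m)).

End OreDefs.

(* Main.v *)
Require Import Defs.
From HB Require Import structures.
From mathcomp Require Import all_boot all_order all_algebra.
Import Order.TTheory GRing.Theory.
Local Open Scope ring_scope.
From Stdlib Require Import ClassicalEpsilon.
From mathcomp Require Import zify.
Set Implicit Arguments. Unset Strict Implicit. Unset Printing Implicit Defensive.

Section S.
Variables (K : algType rat) (D : K -> K).
Hypothesis HDadd : forall x y : K, D (x + y) = D x + D y.
Hypothesis HDmul : forall x y : K, D (x * y) = D x * y + x * D y.

Lemma D0 : D 0 = 0.
Proof. have h := HDadd 0 0; rewrite addr0 in h. by apply: (addrI (D 0)); rewrite addr0 -h. Qed.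

Lemma omul_Dplus c q :
  omul D (Dplus c) q = q * 'X + c *: q + map_poly D q.
Proof.
rewrite /omul /Dplus size_XaddC big_ord_recl big_ord_recl big_ord0 addr0.
rewrite !coefD !coefC !coefX /= add0r addr0.
under eq_bigr do rewrite big_ord_recl big_ord0 addr0 /= bin0 !mul1r subn0.
under [X in _ + X = _]eq_bigr do rewrite big_ord_recl big_ord_recl big_ord0 addr0 /= bin0 bin1 !mul1r subn0 subnn add0n add1n.
rewrite -big_split /=.
have e1 : q * 'X = \sum_(i < size q) q`_i *: 'X^(i.+1).
  rewrite -{1}[q]coefK poly_def mulr_suml; apply: eq_bigr => j _.
  by rewrite -scalerAl -exprSr.
have e2 : c *: q = \sum_(i < size q) (c * q`_i) *: 'X^i.
  rewrite -{1}[q]coefK poly_def scaler_sumr; apply: eq_bigr => j _.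
  by rewrite scalerA.
rewrite e1 e2 /map_poly poly_def -!big_split /=.
by apply: eq_bigr => j _; rewrite add0n addrCA addrA.
Qed.
Lemma D1 : D 1 = 0.
Proof. have h := HDmul 1 1; rewrite !mulr1 !mul1r in h.
by apply: (addrI (D 1)); rewrite addr0 -h. Qed.

Lemma coef_omul_Dplus c q i :
  (omul D (Dplus c) q)`_i = (if i == 0%N then 0 else q`_i.-1) + c * q`_i + D q`_i.
Proof. by rewrite omul_Dplus !coefD coefMX coefZ coef_map_id0 // D0. Qed.

Lemma opow_coef c m :
  (forall i, (m < i)%N -> (opow D (Dplus c) m)`_i = 0)
  /\ (opow D (Dplus c) m)`_m = 1
  /\ ((0 < m)%N -> (opow D (Dplus c) m)`_(m.-1) = m%:R * c).
Proof.
elim: m => [|m [IH1 [IH2 IH3]]].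
  split; first by move=> i hi; rewrite /opow /= coefC; case: i hi.
  by split; [rewrite /opow /= coefC | ].
have -> : opow D (Dplus c) m.+1 = omul D (Dplus c) (opow D (Dplus c) m) by [].
split.
  move=> i hi; rewrite coef_omul_Dplus; case: i hi => // i hi /=.
  by rewrite !IH1 ?D0 ?mulr0 ?addr0 //; apply: ltnW.
split.
  by rewrite coef_omul_Dplus /= IH2 IH1 // D0 mulr0 !addr0.
move=> _; rewrite coef_omul_Dplus /= IH2 D1 addr0 mulr1.
case: m IH1 IH2 IH3 => [|m] IH1 IH2 IH3 /=.
  by rewrite add0r mul1r.
by rewrite IH3 // [in RHS]mulrSr mulrDl mul1r.
Qed.
Lemma uniq_exp (n : nat) (P : nat -> {poly K}) (d : nat -> K) :
  (forall m i, (m < i)%N -> (P m)`_i = 0) -> (forall m, (P m)`_m = 1) ->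
  \sum_(2 <= k < n.+1) d k *: P (n - k)%N = 0 ->
  forall k, (2 <= k <= n)%N -> d k = 0.
Proof.
move=> P1 P2 S k; elim/ltn_ind: k => k IH /andP[k2 kn].
have := congr1 (fun p : {poly K} => p`_(n - k)%N) S.
rewrite /= coef0 coef_sum (bigD1_seq k) /=; last first.
- exact: iota_uniq.
- by rewrite mem_index_iota k2 ltnS.
rewrite coefZ P2 mulr1 big1_seq ?addr0 // => j /andP[jk]; rewrite mem_index_iota => /andP[j2 jn].
rewrite coefZ; case: (ltngtP j k) jk => // hjk _.
  by rewrite IH ?mul0r // j2 -ltnS.
rewrite P1 ?mulr0 //.
rewrite ltnS in jn.
apply: ltn_sub2l => //; exact: (leq_trans hjk).
Qed.
Lemma b1_eq n (M : {poly K}) b : (0 < n)%N -> M`_(n.-1) = n%:R * b -> b1 n M = b.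
Proof.
move=> n0 h; rewrite /b1 h mulr_natl -scaler_nat scalerA mulVf ?scale1r //.
by rewrite Num.Theory.pnatr_eq0 -lt0n.
Qed.

Lemma b1_L n (a : nat -> K) : (0 < n)%N -> b1 n (opL n a) = a 1%N.
Proof.
case: n => // n _; apply: b1_eq => //.
rewrite /opL coef_sum big_ord_recl big_ord_recl /= !coefZ !coefXn subn0 /bump /= !add1n.
rewrite subSS subn0 eqxx mulr1 (ltn_eqF (ltnSn n)) mulr0 add0r bin1 big1 ?addr0 //.
move=> i _; rewrite coefZ coefXn /bump /= !add1n !subSS.
have -> : (n == n - i.+1)%N = false.
  apply/negbTE; rewrite neq_ltn; apply/orP; right; rewrite ltn_subrL /=.
  by case: n i => [[]|].

by rewrite mulr0.
Qed.

Lemma b1_Ls n (a : nat -> K) u : (0 < n)%N -> b1 n (Lstar D n a u) = a 1%N - u.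
Proof.
move=> n0; apply: b1_eq => //.
rewrite /Lstar coefD coef_sum.
have [_ [_ ->]] := opow_coef (a 1%N - u) n; last by [].
rewrite big1_seq ?addr0 // => m /andP[_]; rewrite mem_index_iota => /andP[m2 mn].
rewrite coefZ (proj1 (opow_coef (a 1%N - u) (n - m)) n.-1) ?mulr0 //.
lia.
Qed.
Lemma Iinv_Ls n (a : nat -> K) u : (0 < n)%N -> forall k, (2 <= k <= n)%N ->
  Iinv D n (Lstar D n a u) k = Iinv D n (opL n a) k.
Proof.
move=> n0 k hk.
set Ls := Lstar D n a u.
have E1 : Iexpansion D n Ls (Iinv D n (opL n a)) by rewrite /Iexpansion b1_Ls.
have E2 : Iexpansion D n Ls (Iinv D n Ls) := epsilon_spec _ _ (ex_intro _ _ E1).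
rewrite /Iexpansion b1_Ls // in E1 E2.
set I1 := Iinv D n (opL n a) in E1 *; set I2 := Iinv D n Ls in E2 *.
set P := opow D (Dplus (a 1%N - u)) in E1 E2.
have H : \sum_(2 <= j < n.+1) ('C(n, j)%:R * (I2 j - I1 j)) *: P (n - j)%N = 0.
  under eq_bigr do rewrite mulrBr scalerBl.
  rewrite sumrB; apply/eqP; rewrite subr_eq0; apply/eqP.
  by apply: (addrI (P n)); rewrite -E1 -E2.
have := uniq_exp (fun m i => proj1 (opow_coef (a 1%N - u) m) i)
   (fun m => proj1 (proj2 (opow_coef (a 1%N - u) m))) H hk.
rewrite mulr_natl -scaler_nat => /eqP; rewrite scaler_eq0 Num.Theory.pnatr_eq0.
rewrite eqn0Ngt bin_gt0; case/andP: hk => _ -> /=.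
by rewrite subr_eq0 => /eqP.
Qed.

Lemma add4 (V : zmodType) (a b c d : V) : (a + b) - (c + d) = (a - c) + (b - d).
Proof. by rewrite opprD addrACA. Qed.
Lemma sub4 (V : zmodType) (a b c d : V) : (a - b) - (c - d) = (a - c) - (b - d).
Proof. by rewrite !opprB addrACA [RHS]addrACA [- b + _]addrC. Qed.

Section Der.
Variable f : K -> K.
Hypothesis fadd : forall x y : K, f (x + y) = f x + f y.
Hypothesis fmul : forall x y : K, f (x * y) = f x * y + x * f y.
Lemma f0 : f 0 = 0.
Proof. have h := fadd 0 0; rewrite addr0 in h. by apply: (addrI (f 0)); rewrite addr0 -h. Qed.
Lemma fN (x : K) : f (- x) = - f x.
Proof. by apply: (addrI (f x)); rewrite -fadd !subrr f0. Qed.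
Lemma fB (x y : K) : f (x - y) = f x - f y.
Proof. by rewrite fadd fN. Qed.
Lemma f_comm (u x : K) : f (comm u x) = comm (f u) x + comm u (f x).
Proof. by rewrite /comm fB !fmul [f x * u + _]addrC add4. Qed.
End Der.

Lemma commDr (u x y : K) : comm u (x + y) = comm u x + comm u y.
Proof. by rewrite /comm mulrDl mulrDr add4. Qed.
Lemma commBr (u x y : K) : comm u (x - y) = comm u x - comm u y.
Proof. by rewrite /comm mulrBl mulrBr sub4. Qed.
Lemma commBl (b u x : K) : comm (b - u) x = comm b x - comm u x.
Proof. by rewrite /comm mulrBl mulrBr sub4. Qed.
Lemma commM (a y z : K) : comm a (y * z) = comm a y * z + y * comm a z.
Proof. by rewrite /comm mulrBl mulrBr !mulrA addrA subrK. Qed.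
Lemma commZr (r : rat) (u x : K) : comm u (r *: x) = r *: comm u x.
Proof. by rewrite /comm scalerBr -scalerAr (scalerAl r x u). Qed.

Lemma DeltaD b x y : Delta D b (x + y) = Delta D b x + Delta D b y.
Proof. by rewrite /Delta HDadd commDr addrACA. Qed.
Lemma DeltaM b x y : Delta D b (x * y) = Delta D b x * y + x * Delta D b y.
Proof. by rewrite /Delta HDmul commM addrACA -mulrDl -mulrDr. Qed.
Lemma DeltaB b x y : Delta D b (x - y) = Delta D b x - Delta D b y.
Proof. exact: (fB (DeltaD b)). Qed.
Lemma Delta_comm b u x :
  Delta D b (comm u x) = comm (Delta D b u) x + comm u (Delta D b x).
Proof. exact: (f_comm (DeltaD b) (DeltaM b)). Qed.
Lemma Delta_sub b u x : Delta D (b - u) x = Delta D b x - comm u x.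
Proof. by rewrite /Delta commBl addrA. Qed.
Lemma Delta2_sub b u x :
  Delta D (b - u) (Delta D (b - u) x) = Delta D b (Delta D b x)
   + (comm u (comm u x) - comm (Delta D b u) x - (2 : rat) *: comm u (Delta D b x)).
Proof.
rewrite !Delta_sub DeltaB commBr Delta_comm scaler_nat mulr2n.
set E := Delta D b (Delta D b x); set F := comm (Delta D b u) x.
set G := comm u (Delta D b x); set H := comm u (comm u x).
clearbody E F G H.
by rewrite opprB -addrA; congr (_ + _); rewrite !opprD addrACA (addrC (- F)).
Qed.
Lemma subBA (V : zmodType) (a b c : V) : a - (b - c) = a - b + c.
Proof. by rewrite opprB addrCA addrC. Qed.
Lemma z5 (V : zmodType) (A b c e r q : V) :
  A - (b - c) + (e + r) - q = A - b + e - q + c + r.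
Proof.
by rewrite subBA !addrA (addrAC _ r) (addrAC _ c e) (addrAC _ c (- q)).
Qed.
End S.

Theorem mainTheorem12 (K : algType rat) (D : K -> K)
  (HDadd : forall x y : K, D (x + y) = D x + D y)
  (HDmul : forall x y : K, D (x * y) = D x * y + x * D y)
  (n : nat) (hn : (3 <= n)%N) (a : nat -> K) (ha0 : a 0%N = 1) (u : K) :
  let L := opL n a in
  let Ls := Lstar D n a u in
  let delta := Delta D (a 1%N) in
  W2 D n Ls = W2 D n L
  /\ W3 D n Ls = W3 D n L + (3 / 2 : rat) *: comm u (W2 D n L)
  /\ ((4 <= n)%N ->
      W4 D n Ls = W4 D n L + (2 : rat) *: comm u (Iinv D n L 3)
        + (6 / 5 : rat) *: (comm u (comm u (W2 D n L)) - comm (delta u) (W2 D n L)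
                             - (2 : rat) *: comm u (delta (W2 D n L)))).
Proof.
move=> L Ls delta.
have n0 : (0 < n)%N by apply: leq_trans hn.
have hb1L : b1 n L = a 1%N := b1_L a n0.
have hb1Ls : b1 n Ls = a 1%N - u := b1_Ls HDadd HDmul a u n0.
have I2 : Iinv D n Ls 2 = Iinv D n L 2.
  by apply: (Iinv_Ls HDadd HDmul) => //; rewrite (leq_trans _ hn).
have I3 : Iinv D n Ls 3 = Iinv D n L 3.
  by apply: (Iinv_Ls HDadd HDmul) => //; rewrite hn.
split; first by rewrite /W2 I2.
split.
  rewrite /W3 /W2 hb1Ls hb1L I2 I3 (Delta_sub D) scalerBr subBA.
  by [].
move=> n4.
have I4 : Iinv D n Ls 4 = Iinv D n L 4.
  by apply: (Iinv_Ls HDadd HDmul) => //; rewrite n4.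
rewrite /W4 /W2 hb1Ls hb1L I2 I3 I4 (Delta2_sub HDadd HDmul) (Delta_sub D).
rewrite (scalerBr (2 : rat) (Delta D (a 1%N) (Iinv D n L 3))).
rewrite (scalerDr (6/5 : rat) (Delta D (a 1%N) (Delta D (a 1%N) (Iinv D n L 2)))).
by rewrite z5.
Qed.
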